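(* Let $G$ be the Halin graph built from the tree $T$ consisting of a centre $v_0$ adjacent to four vertices $v_1,v_2,v_3,v_4$, each $v_i$ having exactly two further neighbours (leaves) $v_{i1},v_{i2}$, with the eight leaves joined by the cycle $v_{11}v_{12}v_{21}v_{22}v_{31}v_{32}v_{41}v_{42}v_{11}$. For each edge $vw$ let $L(vw)=\{1,2,\ldots,\max(\deg(v),\deg(w))\}$ (so the four edges at $v_0$ get $\{1,2,3,4\}$ and all other edges get $\{1,2,3\}$). Then $G$ has no $L$-edge-colouring. Consequently the constant $4$ in the hypothesis $|L(vw)|\ge\max(\deg(v),\deg(w),4)$ of the list-colouring lemma for Halin graphs cannot be removed.
   Context: An $L$-edge-colouring is a map $\mathcal{C}$ on $E(G)$ with $\mathcal{C}(e)\in L(e)$ for every edge $e$ and with edges sharing an endpoint receiving different colours. A Halin graph is obtained by taking a planar embedding of a tree with no vertices of degree $2$ and adding a cycle through all its leaves in the cyclic order of the embedding. *)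

(* Defs.v *)
From mathcomp Require Import all_boot.
Set Implicit Arguments. Unset Strict Implicit. Unset Printing Implicit Defensive.

(* Vertices of the Halin graph G: 'I_13 with the numbering
   0 = v0 (centre); 1,2,3,4 = v1..v4;
   leaves v_{i1} = 3 + 2i, v_{i2} = 4 + 2i, i.e.
   v11=5, v12=6, v21=7, v22=8, v31=9, v32=10, v41=11, v42=12. *)
Definition V := 'I_13.

Definition halin_edges : seq (nat * nat) :=
  [:: (0,1); (0,2); (0,3); (0,4);
      (1,5); (1,6); (2,7); (2,8); (3,9); (3,10); (4,11); (4,12);
      (5,6); (6,7); (7,8); (8,9); (9,10); (10,11); (11,12); (12,5)].

Definition adj (u v : V) : bool :=
  ((nat_of_ord u, nat_of_ord v) \in halin_edges) ||
  ((nat_of_ord v, nat_of_ord u) \in halin_edges).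

Definition deg (v : V) : nat := #|[set w : V | adj v w]|.

Definition L (v w : V) : pred nat := fun k => (1 <= k <= maxn (deg v) (deg w)).

(* An L-edge-colouring: a colour for each edge (given as a function on
   ordered adjacent pairs that is symmetric, i.e. a function on E(G)),
   with colours from the lists and adjacent edges coloured differently. *)
Definition L_edge_colouring (c : V -> V -> nat) : Prop :=
  [/\ (forall u v, adj u v -> c u v = c v u),
      (forall u v, adj u v -> c u v \in L u v) &
      (forall u v w, adj u v -> adj u w -> v != w -> c u v != c u w)].

(* Main.v *)
Require Import Defs.
From mathcomp Require Import all_boot.
Set Implicit Arguments. Unset Strict Implicit. Unset Printing Implicit Defensive.

Definition o (n : nat) : V := Ordinal (ltn_pmod n (isT : 0 < 13)).
Definition ep (i : nat) : nat * nat := nth (0,0) halin_edges i.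

Definition share_vertex (p q : nat * nat) : option (nat * nat * nat) :=
  if p.1 == q.1 then Some (p.1, p.2, q.2)
  else if p.1 == q.2 then Some (p.1, p.2, q.1)
  else if p.2 == q.1 then Some (p.2, p.1, q.2)
  else if p.2 == q.2 then Some (p.2, p.1, q.1) else None.

Definition is_pair (p : nat * nat) : bool :=
  (p.1 != p.2) && (if share_vertex (ep p.1) (ep p.2) is Some _ then true else false).

Definition cons_list : seq (nat * nat) :=
  [:: (0, 1); (0, 2); (0, 3); (0, 4); (0, 5); ( 1, 0); (1, 2); (1, 3); (1, 6); (1, 7); ( 2, 0); (2, 1); (2, 3); (2, 8); (2, 9); ( 3, 0); (3, 1); (3, 2); (3, 10); (3, 11); ( 4, 0); (4, 5); (4, 12); (4, 19); (5, 0); ( 5, 4); (5, 12); (5, 13); (6, 1); (6, 7); ( 6, 13); (6, 14); (7, 1); (7, 6); (7, 14); ( 7, 15); (8, 2); (8, 9); (8, 15); (8, 16); ( 9, 2); (9, 8); (9, 16); (9, 17); (10, 3); ( 10, 11); (10, 17); (10, 18); (11, 3); (11, 10); ( 11, 18); (11, 19); (12, 4); (12, 5); (12, 13); ( 12, 19); (13, 5); (13, 6); (13, 12); (13, 14); ( 14, 6); (14, 7); (14, 13); (14, 15); (15, 7); ( 15, 8); (15, 14); (15, 16); (16, 8); (16, 9); ( 16, 15); (16, 17); (17, 9); (17, 10); (17, 16); ( 17, 18); (18, 10); (18, 11); (18, 17); ( 18, 19); (19, 4); (19, 11); (19, 12); (19, 18)].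

Definition rng (i : nat) : seq nat := if i < 4 then iota 1 4 else iota 1 3.

Definition consistent (a : seq nat) : bool :=
  all (fun p => ((p.1 < size a) && (p.2 < size a)) ==> (nth 0 a p.1 != nth 0 a p.2))
    cons_list.

Fixpoint search (n : nat) (asg : seq nat) : bool :=
  match n with
  | 0 => ~~ consistent asg
  | n'.+1 => all (fun x => let a := rcons asg x in
                           if consistent a then search n' a else true)
                 (rng (size asg))
  end.

Lemma search_true : search 20 [::].
Proof. vm_compute. reflexivity. Qed.

Lemma consistent_prefix (f : nat -> nat) k N :
  k <= N -> consistent (mkseq f N) -> consistent (mkseq f k).
Proof.
move=> kN /allP H; apply/allP=> p pin; apply/implyP; rewrite size_mkseq => /andP[h1 h2].
have h1' := leq_trans h1 kN; have h2' := leq_trans h2 kN.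
have := H p pin; rewrite size_mkseq h1' h2' /=.
by rewrite !nth_mkseq.
Qed.

Lemma sound (f : nat -> nat) :
  (forall i, i < 20 -> f i \in rng i) -> consistent (mkseq f 20) ->
  forall n k, k + n = 20 -> search n (mkseq f k) = false.
Proof.
move=> Hr Hc; elim=> [|n IH] k Hk /=.
  by rewrite addn0 in Hk; subst; rewrite Hc.
apply/negbTE/negP => /allP /(_ (f k)).
rewrite size_mkseq -cats1 -/(mkseq f k) .
have -> : mkseq f k ++ [:: f k] = mkseq f k.+1.
  by rewrite /mkseq -addn1 iotaD map_cat.
rewrite IH ?(consistent_prefix _ Hc) //; last by rewrite addSnnS.
  move=> H; have hk : k < 20 by rewrite -Hk -addn1 leq_add2l.
  by have := H (Hr _ hk).
by rewrite -Hk -addn1 leq_add2l.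
Qed.

Definition valid_pair (p : nat * nat) : bool :=
  match share_vertex (ep p.1) (ep p.2) with
  | Some (w, x, y) => [&& w < 13, x < 13, y < 13, x != y, adj (o w) (o x), adj (o w) (o y),
      (ep p.1 == (w, x)) || (ep p.1 == (x, w)) & (ep p.2 == (w, y)) || (ep p.2 == (y, w))]
  | None => false
  end.

Lemma valid_all : all valid_pair cons_list.
Proof. vm_compute. reflexivity. Qed.

Lemma oK (i : V) : o i = i.
Proof. by apply: val_inj; rewrite /= modn_small. Qed.

Lemma degE v : deg v = \sum_(0 <= n < 13) (adj v (o n) : nat).
Proof.
rewrite /deg -sum1_card big_mkcond /= big_mkord.
by apply: eq_bigr => i _; rewrite inE oK; case: (adj v i).
Qed.

Definition dgl := [:: 4;3;3;3;3;3;3;3;3;3;3;3;3].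

Lemma degs : [seq \sum_(0 <= n < 13) (adj (o i) (o n) : nat) | i <- iota 0 13] = dgl.
Proof. rewrite unlock. vm_compute. reflexivity. Qed.

Lemma degT a : a < 13 -> deg (o a) = nth 0 dgl a.
Proof.
move=> ha; rewrite -degs (nth_map 0) ?size_iota // nth_iota // add0n degE //.
Qed.

Definition edge_ok (i : nat) : bool :=
  [&& (ep i).1 < 13, (ep i).2 < 13, adj (o (ep i).1) (o (ep i).2) &
  (maxn (nth 0 dgl (ep i).1) (nth 0 dgl (ep i).2) == if i < 4 then 4 else 3)].

Lemma edges_ok : all edge_ok (iota 0 20).
Proof. vm_compute. reflexivity. Qed.

Theorem mainTheorem11 : ~ exists c : V -> V -> nat, L_edge_colouring c.
Proof.
case=> c [Hs Hl Hd].
pose f i := c (o (ep i).1) (o (ep i).2).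
have Hr : forall i, i < 20 -> f i \in rng i.
  move=> i hi; have /allP/(_ i) := edges_ok; rewrite mem_iota /= => /(_ hi).
  case/and4P=> h1 h2 ha /eqP hm; have := Hl _ _ ha; rewrite /L /= !degT // hm /f /rng.
  by case: (i < 4); rewrite mem_iota => /andP[-> h] /=; rewrite ltnS.
have Hc : consistent (mkseq f 20).
  apply/allP=> p pin; apply/implyP; rewrite size_mkseq => /andP[h1 h2].
  rewrite !nth_mkseq //.
  have := allP valid_all p pin; rewrite /valid_pair.
  case: (share_vertex _ _) => [[[w x] y]|] //.
  case/and5P=> hw hx hy hxy /and4P[a1 a2 e1 e2].
  have ox : o x != o y.
    apply: contra hxy => /eqP /(congr1 val); rewrite /= !modn_small // => ->; exact: eqxx.
  have fe : forall i z, adj (o w) (o z) ->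
      (ep i == (w, z)) || (ep i == (z, w)) -> f i = c (o w) (o z).
    move=> i z az; rewrite /f; case/orP=> /eqP -> //=.
    by rewrite Hs // /adj orbC.
  rewrite (fe _ _ a1 e1) (fe _ _ a2 e2); exact: Hd.
have := sound Hr Hc (n:=20) (k:=0) (erefl 20).
have -> : mkseq f 0 = [::] by [].
by rewrite search_true.
Qed.
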